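(* There is an absolute constant $c>0$ such that for every max game $\mathcal R$ on a graph with $n\ge2$ nodes, the price of anarchy satisfies $PoA\le c\,(L+\log n)$; that is, $PoA=O(L+\log n)$.
   Context: A routing game $(\mathbf N,G,\mathcal P)$: players $\{1,\dots,N\}$ ($N\ge1$), a simple graph $G$ with $n$ nodes, and for each player $i$ a nonempty finite set $\mathcal P_i$ of paths from $u_i$ to $v_i$; $L=\max_{p\in\bigcup_i\mathcal P_i}|p|$ (path length = number of edges). A routing is $\mathbf p=[p_1,\dots,p_N]$, $p_i\in\mathcal P_i$. $C_e(\mathbf p)$ = number of players whose path uses edge $e$; $C_i(\mathbf p)=\max_{e\in p_i}C_e(\mathbf p)$; $D_i(\mathbf p)=|p_i|$; $C(\mathbf p)=\max_eC_e(\mathbf p)$; $D(\mathbf p)=\max_i|p_i|$. Max game: player cost $pc_i=\max(C_i,D_i)$, social cost $SC=\max(C,D)$. A Nash-routing is one where no player can strictly lower $pc_i$ by unilaterally changing its path within $\mathcal P_i$. With $SC^*$ the minimum social cost over all routings and $\mathbf P$ the (nonempty) set of Nash-routings, $PoA=\sup_{\mathbf p\in\mathbf P}SC(\mathbf p)/SC^*$. *)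

(* Defs.v *)
From mathcomp Require Import all_boot.
Set Implicit Arguments. Unset Strict Implicit. Unset Printing Implicit Defensive.

Definition simple_graph (n : nat) (adj : rel 'I_n) : Prop :=
  (forall x y, adj x y = adj y x) /\ (forall x, ~~ adj x x).

(* A path is given by its start node and the sequence of following nodes.
   Its length is the number of edges, i.e. the size of the sequence. *)
Definition gpath (n : nat) : Type := ('I_n * seq 'I_n)%type.

Definition gpath_len n (p : gpath n) : nat := size p.2.
Definition gpath_start n (p : gpath n) : 'I_n := p.1.
Definition gpath_end n (p : gpath n) : 'I_n := last p.1 p.2.

Definition gpath_steps n (p : gpath n) : seq ('I_n * 'I_n) := zip (p.1 :: p.2) p.2.

Definition is_path_from_to n (adj : rel 'I_n) (u v : 'I_n) (p : gpath n) : bool :=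
  [&& path adj p.1 p.2, uniq (p.1 :: p.2), gpath_start p == u & gpath_end p == v].

Definition uses_edge n (p : gpath n) (e : 'I_n * 'I_n) : bool :=
  has (fun st => (st == e) || (st == (e.2, e.1))) (gpath_steps p).

Section Game.
Variables (n N : nat).

Definition routing := 'I_N -> gpath n.

Definition cong_edge (r : routing) (e : 'I_n * 'I_n) : nat :=
  #|[set i : 'I_N | uses_edge (r i) e]|.

Definition cong_player (r : routing) (i : 'I_N) : nat :=
  \max_(e <- gpath_steps (r i)) cong_edge r e.

Definition dil_player (r : routing) (i : 'I_N) : nat := gpath_len (r i).

Definition player_cost (r : routing) (i : 'I_N) : nat :=
  maxn (cong_player r i) (dil_player r i).

Definition congestion (adj : rel 'I_n) (r : routing) : nat :=
  \max_(e : 'I_n * 'I_n | adj e.1 e.2) cong_edge r e.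
Definition dilation (r : routing) : nat := \max_(i : 'I_N) dil_player r i.

Definition social_cost (adj : rel 'I_n) (r : routing) : nat :=
  maxn (congestion adj r) (dilation r).

Definition valid_routing (P : 'I_N -> seq (gpath n)) (r : routing) : Prop :=
  forall i, r i \in P i.

Definition update (r : routing) (i : 'I_N) (q : gpath n) : routing :=
  fun j => if j == i then q else r j.

Definition nash_routing (P : 'I_N -> seq (gpath n)) (r : routing) : Prop :=
  valid_routing P r /\
  forall i q, q \in P i -> (player_cost r i <= player_cost (update r i q) i)%N.

Definition max_path_len (P : 'I_N -> seq (gpath n)) : nat :=
  \max_(i : 'I_N) \max_(p <- P i) gpath_len p.

Definition routing_game (adj : rel 'I_n) (u v : 'I_N -> 'I_n)
    (P : 'I_N -> seq (gpath n)) : Prop :=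
  simple_graph adj /\ (1 <= N)%N /\
  forall i, P i != [::] /\ all (is_path_from_to adj (u i) (v i)) (P i).

End Game.

(* Main.v *)
Require Import Defs.
From mathcomp Require Import all_boot.
Set Implicit Arguments. Unset Strict Implicit. Unset Printing Implicit Defensive.

Lemma card_sum (T : finType) (b : pred T) : #|[set i | b i]| = \sum_i (b i : nat).
Proof.
rewrite -sum1_card big_mkcond /=; apply: eq_bigr => i _; rewrite inE; by case: (b i).
Qed.

Lemma exch_card (I E : finType) (S : {set E}) (R : I -> E -> bool) :
  \sum_(e in S) #|[set i | R i e]| = \sum_i #|[set e in S | R i e]|.
Proof.
under eq_bigr => e _ do rewrite card_sum.
rewrite exchange_big /=; apply: eq_bigr => i _.
rewrite card_sum big_mkcond /=; apply: eq_bigr => e _; by case: (e \in S).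
Qed.

Lemma union_bound (I E : finType) (S : {set E}) (R : I -> E -> bool) :
  #|[set i | [exists e in S, R i e]]| <= \sum_(e in S) #|[set i | R i e]|.
Proof.
rewrite exch_card card_sum; apply: leq_sum => i _.
case: (boolP [exists e in S, R i e]) => // /existsP [e /andP [eS Re]].
rewrite card_gt0; apply/set0Pn; exists e; by rewrite inE eS Re.
Qed.

Lemma steps_adj n (adj : rel 'I_n) x s : path adj x s ->
  forall st, st \in zip (x :: s) s -> adj st.1 st.2.
Proof.
elim: s x => [|y s IH] x //= /andP [axy ps] st.
rewrite in_cons => /orP [/eqP -> //| ]; exact: IH.
Qed.

Lemma size_steps n (p : gpath n) : size (gpath_steps p) = gpath_len p.
Proof. rewrite /gpath_steps size_zip /gpath_len /=; apply/minn_idPr; exact: leqnSn. Qed.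

Definition swap n (e : 'I_n * 'I_n) := (e.2, e.1).

Lemma uses_mem n (p : gpath n) e : uses_edge p e -> e \in gpath_steps p ++ map (@swap n) (gpath_steps p).
Proof.
move/hasP => [st sin /orP [/eqP <-|/eqP E]]; rewrite mem_cat ?sin //.
apply/orP; right; have -> : e = swap st by rewrite E /swap; case: e {E}.
exact: map_f.
Qed.

Lemma card_uses n (p : gpath n) (S : {set 'I_n * 'I_n}) :
  #|[set e in S | uses_edge p e]| <= 2 * gpath_len p.
Proof.
apply: (@leq_trans #|[pred e | e \in gpath_steps p ++ map (@swap n) (gpath_steps p)]|).
  apply: subset_leq_card; apply/subsetP => e; rewrite inE => /andP [_ /uses_mem]; by [].
apply: leq_trans (card_size _) _.
by rewrite size_cat size_map size_steps mul2n addnn.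
Qed.

Lemma uses_swap n (p : gpath n) e : uses_edge p (swap e) = uses_edge p e.
Proof.
rewrite /uses_edge /swap /=; apply: eq_has => st; rewrite orbC; by case: e.
Qed.
From Stdlib Require Import Lia.

Section Game.
Variables (n N : nat) (adj : rel 'I_n) (u v : 'I_N -> 'I_n) (P : 'I_N -> seq (gpath n)).
Variables (r r' : routing n N).
Hypothesis Hg : routing_game adj u v P.
Hypothesis Hn : nash_routing P r.
Hypothesis Hv : valid_routing P r'.

Let L := max_path_len P.
Let K := congestion adj r'.

Lemma len_le_L i p : p \in P i -> gpath_len p <= L.
Proof.
move=> pin; apply: (leq_trans _ (leq_bigmax i)).
exact: (@leq_bigmax_seq ('I_n * seq 'I_n)%type (P i) predT (@gpath_len n) p pin).
Qed.

Definition Aset t := [set e : 'I_n * 'I_n | adj e.1 e.2 && (t <= cong_edge r e)].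
Definition Piset t := [set i : 'I_N | [exists e in Aset t, uses_edge (r i) e]].

Lemma cong_swap (rr : routing n N) e : cong_edge rr (swap e) = cong_edge rr e.
Proof. apply: eq_card => i; by rewrite !inE uses_swap. Qed.

Lemma cong_player_ge i e : uses_edge (r i) e -> cong_edge r e <= cong_player r i.
Proof.
move/hasP => [st sin /orP [/eqP <-|/eqP E]].
  exact: (@leq_bigmax_seq ('I_n * 'I_n)%type _ predT (cong_edge r) _ sin).
have -> : e = swap st by rewrite E /swap; case: e {E}.
rewrite cong_swap; exact: (@leq_bigmax_seq ('I_n * 'I_n)%type _ predT (cong_edge r) _ sin).
Qed.

Lemma update_cong i q e : cong_edge (update r i q) e <= (cong_edge r e).+1.
Proof.
rewrite /cong_edge; apply: (@leq_trans #|i |: [set j | uses_edge (r j) e]|).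
  apply: subset_leq_card; apply/subsetP => j; rewrite !inE /update.
  by case: (j =P i) => [->|_] /=; rewrite ?eqxx // => ->; rewrite orbT.
rewrite cardsU1; case: (i \notin _) => //.
Qed.

Lemma nash_step t i : L < t -> i \in Piset t -> [exists e in Aset t.-1, uses_edge (r' i) e].
Proof.
move=> Lt; rewrite inE => /existsP [e0 /andP [e0A e0u]].
case: (boolP [exists e in Aset t.-1, uses_edge (r' i) e]) => // /negP Hno; exfalso.
have t1 : t <= player_cost r i.
  move: e0A; rewrite inE => /andP [_ ht].
  apply: (leq_trans ht); apply: (leq_trans (cong_player_ge e0u)); exact: leq_maxl.
have := (proj2 Hn) i (r' i) (Hv i).
rewrite /player_cost /dil_player.
have -> : update r i (r' i) i = r' i by rewrite /update eqxx.
move=> H; have : t <= t.-1; last by case: t Lt {t1 H Hno e0A} => // ? ?; rewrite ltnn.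
apply: (leq_trans t1); apply: (leq_trans H); rewrite geq_max; apply/andP; split.
  apply/bigmax_leqP_seq => st sin0 _.
  have sin : st \in gpath_steps (r' i) by move: sin0; rewrite /update eqxx.
  apply: (leq_trans (update_cong _ _ _)).
  have ast : adj st.1 st.2.
    have := Hv i; move: (Hg) => [_ [_ HP]] Hin.
    have := allP (proj2 (HP i)) _ Hin; case/and4P => pa _ _ _.
    apply: (steps_adj pa); exact: sin.
  rewrite ltnNge; apply/negP => ge; apply: Hno; apply/existsP; exists st.
  rewrite inE ast ge /=; apply/hasP; exists st => //; by rewrite eqxx.
rewrite -ltnS; case: t Lt {t1 H Hno e0A} => // t' Lt /=.
exact: (leq_ltn_trans (len_le_L (Hv i)) Lt).
Qed.

Lemma Pi_bound t : L < t -> #|Piset t| <= K * #|Aset t.-1|.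
Proof.
move=> Lt.
apply: (@leq_trans #|[set i | [exists e in Aset t.-1, uses_edge (r' i) e]]|).
  apply: subset_leq_card; apply/subsetP => i ip; rewrite inE; exact: nash_step.
apply: (leq_trans (union_bound _ _)).
rewrite mulnC -sum_nat_const; apply: leq_sum => e; rewrite inE => /andP [ae _].
exact: (leq_bigmax_cond (P:= fun e : 'I_n * 'I_n => adj e.1 e.2) (F:=cong_edge r') e ae).
Qed.

Lemma A_bound t : t * #|Aset t| <= 2 * L * #|Piset t|.
Proof.
apply: (@leq_trans (\sum_(e in Aset t) cong_edge r e)).
  rewrite mulnC -sum_nat_const; apply: leq_sum => e; rewrite inE => /andP [_ ->] //.
rewrite /cong_edge exch_card.
apply: (@leq_trans (\sum_i (if i \in Piset t then 2 * L else 0))).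
  apply: leq_sum => i _; case: ifP => ip.
    apply: (leq_trans (card_uses _ _)); rewrite leq_mul2l /=; exact: len_le_L (proj1 Hn i).
  rewrite leqn0 cards_eq0; apply/eqP/setP => e; rewrite !inE.
  apply/negP => /andP [eA eu]; move/negbT: ip; rewrite inE => /negP; apply.
  by apply/existsP; exists e; rewrite inE eA.
by rewrite -big_mkcond sum_nat_const mulnC.
Qed.

Lemma combined t : L < t -> t * #|Aset t| <= 2 * L * K * #|Aset t.-1|.
Proof.
move=> Lt; apply: (leq_trans (A_bound t)); rewrite -[2 * L * K * _]mulnA leq_mul2l; apply/orP; right.
exact: Pi_bound.
Qed.


Lemma double t : 4*L*K < t -> L < t -> 2*#|Aset t| <= #|Aset t.-1|.
Proof.
move=> h1 h2; have := combined h2.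
case: (posnP (L*K)) => [LK0|LKp] H.
  move: H; rewrite -(mulnA 2 L K) LK0 muln0 mul0n leqn0 muln_eq0 => /orP [/eqP t0|/eqP ->] //.
  by rewrite t0 in h2.
have e1 : 2 * (L * K) * (2 * #|Aset t|) = 4 * L * K * #|Aset t|.
  rewrite -!multE; lia.
have e2 : 2 * L * K * #|Aset t.-1| = 2 * (L * K) * #|Aset t.-1| by rewrite mulnA.
have m0 : 0 < 2 * (L * K) by rewrite muln_gt0.
rewrite -(leq_pmul2l m0) e1 -e2.
apply: leq_trans H; rewrite leq_mul2r; apply/orP; right; exact: ltnW.
Qed.

Lemma iterA k C : 0 < K -> 4*L*K + k <= C -> 2^k * #|Aset C| <= #|Aset (C - k)|.
Proof.
move=> Kp; elim: k => [|k IH] h; first by rewrite expn0 mul1n subn0.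
have h' : 4*L*K + k <= C by apply: leq_trans h; rewrite leq_add2l.
apply: (@leq_trans (2 * #|Aset (C-k)|)).
  by rewrite expnS -mulnA leq_mul2l IH ?orbT.
rewrite subnS; apply: double.
  move/leP: h => h; apply/leP; rewrite -?plusE -?minusE -?multE in h *; lia.
have LK : L <= 4 * L * K.
  rewrite -mulnA mulnCA leq_pmulr // muln_gt0 Kp //.
move/leP: h => h; move/leP: LK => LK; apply/leP; rewrite -?plusE -?minusE -?multE in h LK *; lia.
Qed.

Lemma A_nonempty : 0 < congestion adj r -> 0 < #|Aset (congestion adj r)|.
Proof.
move=> Cp; rewrite card_gt0; apply/set0Pn.
case: (boolP [exists e : 'I_n * 'I_n, adj e.1 e.2 && (congestion adj r <= cong_edge r e)]).
  by move/existsP => [e he]; exists e; rewrite inE.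
move/negP => Hno; exfalso.
have : congestion adj r <= (congestion adj r).-1.
  rewrite {1}/congestion; apply/bigmax_leqP => e ae.
  rewrite -ltnS prednK // ltnNge; apply/negP => ge; apply: Hno; apply/existsP; exists e.
  by rewrite ae ge.
by case: (congestion adj r) Cp => // c _; rewrite ltnn.
Qed.

Lemma nat_bound : 2 <= n -> 0 < K -> 2 ^ (congestion adj r - 4*L*K) <= n * n.
Proof.
move=> n2 Kp; case: (leqP (congestion adj r) (4*L*K)) => h.
  move: h; rewrite -subn_eq0 => /eqP ->; rewrite expn0 muln_gt0.
  by case: n n2.
have Cp : 0 < congestion adj r by apply: leq_ltn_trans h.
have := @iterA (congestion adj r - 4*L*K) (congestion adj r) Kp.
rewrite subnKC ?(ltnW h) // => /(_ (leqnn _)) H.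
apply: (leq_trans (leq_pmulr _ (A_nonempty Cp))); apply: (leq_trans H).
apply: leq_trans (max_card _) _; by rewrite card_prod card_ord.
Qed.

Lemma dil_le : dilation r <= L.
Proof. apply/bigmax_leqP => i _; exact: len_le_L (proj1 Hn i). Qed.

Lemma C0 : L = 0 -> congestion adj r = 0.
Proof.
move=> L0; case: (posnP (congestion adj r)) => // Cp.
have := @combined (congestion adj r); rewrite L0 Cp => /(_ isT).
rewrite muln0 mul0n leqn0 muln_eq0 => /orP [/eqP c0|/eqP a0].
  by rewrite c0 in Cp.
by have := A_nonempty Cp; rewrite a0.
Qed.

Lemma L0 : dilation r' = 0 -> L = 0.
Proof.
move=> D0; apply/eqP; rewrite -leqn0; apply/bigmax_leqP => i _.
apply/bigmax_leqP_seq => p pin _.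
have l0 : gpath_len (r' i) = 0.
  by apply/eqP; rewrite -leqn0 -D0; exact: (leq_bigmax (F := dil_player r') i).
move: Hg => [_ [_ HP]]; have [_ ap] := HP i.
have := allP ap _ (Hv i); case/and4P => _ _ /eqP s1 /eqP e1.
have := allP ap _ pin; case/and4P => _ up /eqP s2 /eqP e2.
move: l0 e1 s1; rewrite /gpath_len /gpath_end /gpath_start; case: (r' i) => x [|y s] //= _ e1 s1.
move: up e2 s2; rewrite /gpath_end /gpath_start; case: p {pin} => x' [|y s] //= up e2 s2.
exfalso; move: up => /andP [/negP nin _]; apply: nin.
have -> : x' = last y s by rewrite e2 s2 -e1 s1.
exact: mem_last.
Qed.

Lemma C_small : K = 0 -> congestion adj r <= L.
Proof.
move=> K0; case: (leqP (congestion adj r) L) => // h.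
have Cp : 0 < congestion adj r by apply: leq_ltn_trans h.
have := combined h; rewrite K0 muln0 mul0n leqn0 muln_eq0 => /orP [/eqP c0|/eqP a0].
  by rewrite c0 in Cp.
by have := A_nonempty Cp; rewrite a0.
Qed.

End Game.

From Stdlib Require Import Reals Lra Psatz.
Open Scope R_scope.

Lemma ln_le x y : 0 < x -> x <= y -> ln x <= ln y.
Proof.
move=> hx hxy; case: (Rle_lt_or_eq_dec _ _ hxy) => [h|->]; last lra.
left; exact: ln_increasing.
Qed.

Lemma ln_bound (n x : nat) : (expn 2 x <= muln n n)%nat -> (2 <= n)%nat -> INR x <= 4 * ln (INR n).
Proof.
move=> /leP H /leP n2.
have Hn : 2 <= INR n by apply: (le_INR 2).
have H1 : INR (expn 2 x) <= INR (n * n) by apply: le_INR.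
rewrite -multE mult_INR in H1.
have e : INR (expn 2 x) = 2 ^ x.
  elim: x {H H1} => [|x IH]; first by [].
  rewrite expnS -multE mult_INR IH /=; lra.
rewrite e in H1.
have H2 : ln (2 ^ x) <= ln (INR n * INR n) by apply: ln_le => //; apply: pow_lt; lra.
rewrite ln_pow in H2; last lra.
rewrite ln_mult in H2; try lra.
have h2 := ln_lt_2; have hx := pos_INR x.
have : 0 <= INR x * (ln 2 - / 2) by apply: Rmult_le_pos; lra.
nra.
Qed.

Theorem mainTheorem6 :
  exists c : R, 0 < c /\
  forall (n N : nat) (adj : rel 'I_n) (u v : 'I_N -> 'I_n)
         (P : 'I_N -> seq (gpath n)),
    is_true (leq 2 n) ->
    routing_game adj u v P ->
    forall r r' : routing n N,
      nash_routing P r ->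
      valid_routing P r' ->
      INR (social_cost adj r)
        <= c * (INR (max_path_len P) + ln (INR n)) * INR (social_cost adj r').
Proof.
exists 4; split; first lra.
move=> n N adj u v P n2 Hg r r' Hn Hv.
have Dl := dil_le Hn.
have lnn : 0 <= ln (INR n).
  rewrite -ln_1; apply: ln_le; first lra.
  apply: (le_INR 1); apply/leP; exact: ltnW.
have LR : 0 <= INR (max_path_len P) by apply: pos_INR.
case: (posnP (social_cost adj r')) => [S0|Sp].
  have D0 : dilation r' = 0%nat by apply/eqP; rewrite -leqn0 -S0 leq_maxr.
  have L0' := L0 Hg Hv D0.
  have C0' := C0 Hg Hn Hv L0'.
  have -> : social_cost adj r = 0%nat.
    by rewrite /social_cost C0' max0n; apply/eqP; rewrite -leqn0 -L0'.
  rewrite S0 /=; lra.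
have K1 : 1 <= INR (social_cost adj r') by apply: (le_INR 1); apply/leP.
have Kle : (congestion adj r' <= social_cost adj r')%nat by exact: leq_maxl.
case: (posnP (congestion adj r')) => [K0|Kp].
  have Cs := C_small Hg Hn Hv K0.
  have : (social_cost adj r <= max_path_len P)%nat by rewrite geq_max Cs Dl.
  move/leP/le_INR => H; nra.
have NB := nat_bound Hg Hn Hv n2 Kp.
have Hx := ln_bound NB n2.
set x := (congestion adj r - _)%nat in NB Hx.
have hC : (social_cost adj r <= 4 * max_path_len P * social_cost adj r' + x)%nat.
  rewrite geq_max; apply/andP; split.
    apply: (@leq_trans (4 * max_path_len P * congestion adj r' + x)).
      by rewrite /x -leq_subLR.
    by rewrite leq_add2r leq_mul2l Kle orbT.
  apply: (leq_trans Dl); apply: leq_trans (leq_addr _ _).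
  by rewrite -mulnA mulnCA leq_pmulr // muln_gt0.
move/leP/le_INR: hC; rewrite plus_INR !mult_INR => H.
rewrite [INR 4]/= in H; nra.
Qed.
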